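(* Let $\delta_j,\delta_k$ be coprime integers with $1<\delta_j<\delta_k$, let $r=\delta_k\bmod\delta_j$ and let $f\colon \mathcal B(\delta_j,r)\to\mathcal B(\delta_k,\delta_j)$, $f(x',y')=(y',\,x'-y'\lfloor \delta_k/\delta_j\rfloor)$. Then the irreducible elements of $\mathcal B(\delta_k,\delta_j)\cap f(\mathcal B(\delta_j,r))$ are exactly the images $f(\mathbf x')$ of the irreducible elements $\mathbf x'$ of $\mathcal B(\delta_j,r)$.
   Context: For coprime positive integers $p,q$ and $i\in\{1,\ldots,\max\{p,q\}\}$, the $\lambda$-B\'ezout couple $\boldsymbol\lambda_i$ of $i$ for $(p,q)$ is the unique $(x,y)\in\mathbb Z^2$ with $xp+yq=i$ and $0<y\le p$, and the $\mu$-B\'ezout couple $\boldsymbol\mu_i$ of $i$ for $(p,q)$ is the unique $(x,y)\in\mathbb Z^2$ with $xp+yq=i$ and $0<x\le q$. $\mathcal B(p,q)$ denotes the set of all $\lambda$- and $\mu$-B\'ezout couples for $(p,q)$. $\boldsymbol\lambda_i$ is irreducible if there are no $j,k\in\{1,\ldots,\max\{p,q\}\}$ with $\boldsymbol\lambda_i=\boldsymbol\lambda_j+\boldsymbol\lambda_k$; likewise $\boldsymbol\mu_i$ is irreducible if there are no such $j,k$ with $\boldsymbol\mu_i=\boldsymbol\mu_j+\boldsymbol\mu_k$. *)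

(* Defs.v *)
From Stdlib Require Import ZArith Lia.
Open Scope Z_scope.

Definition is_lambda_couple (p q i : Z) (v : Z * Z) : Prop :=
  fst v * p + snd v * q = i /\ 0 < snd v <= p.

Definition is_mu_couple (p q i : Z) (v : Z * Z) : Prop :=
  fst v * p + snd v * q = i /\ 0 < fst v <= q.

Definition lambda_couple (p q : Z) (v : Z * Z) : Prop :=
  exists i, 1 <= i <= Z.max p q /\ is_lambda_couple p q i v.

Definition mu_couple (p q : Z) (v : Z * Z) : Prop :=
  exists i, 1 <= i <= Z.max p q /\ is_mu_couple p q i v.

Definition Bez (p q : Z) (v : Z * Z) : Prop :=
  lambda_couple p q v \/ mu_couple p q v.

Definition addZ2 (u w : Z * Z) : Z * Z := (fst u + fst w, snd u + snd w).

Definition irreducible_Bez (p q : Z) (v : Z * Z) : Prop :=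
  (lambda_couple p q v /\
     ~ (exists u w, lambda_couple p q u /\ lambda_couple p q w /\ v = addZ2 u w))
  \/
  (mu_couple p q v /\
     ~ (exists u w, mu_couple p q u /\ mu_couple p q w /\ v = addZ2 u w)).

Definition fmap (dj dk : Z) (v : Z * Z) : Z * Z :=
  (snd v, fst v - snd v * (dk / dj)).

(* Main.v *)
Require Import Defs.
From Stdlib Require Import ZArith Lia.
Open Scope Z_scope.

Definition FF (Q : Z) (v : Z * Z) : Z * Z := (snd v, fst v - snd v * Q).
Definition GG (Q : Z) (v : Z * Z) : Z * Z := (snd v + fst v * Q, fst v).
Definition II (p q : Z) (v : Z * Z) : Z := fst v * p + snd v * q.

Lemma lam_i p q v : lambda_couple p q v -> 1 <= II p q v <= Z.max p q.
Proof. intros [i [Hi [He _]]]. unfold II. lia. Qed.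
Lemma mu_i p q v : mu_couple p q v -> 1 <= II p q v <= Z.max p q.
Proof. intros [i [Hi [He _]]]. unfold II. lia. Qed.

Lemma lam_fst p q v : 1 <= q < p -> lambda_couple p q v -> fst v <= 0 /\ 0 < snd v.
Proof.
  destruct v as [a b]; simpl. intros Hq [i [Hi [He Hb]]]; simpl in *.
  split; [|lia].
  assert (b * q >= q) by nia. assert (a * p <= p - q) by lia.
  destruct (Z.le_gt_cases a 0); [lia|]. nia.
Qed.
Lemma mu_snd p q v : 1 <= q < p -> mu_couple p q v -> snd v <= 0 /\ 0 < fst v.
Proof.
  destruct v as [a b]; simpl. intros Hq [i [Hi [He Hb]]]; simpl in *.
  split; [|lia].
  assert (b * q <= 0) by nia.
  destruct (Z.le_gt_cases b 0); [lia|]. nia.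
Qed.

Section S.
Variables p q r Q : Z.
Hypothesis Hp : p = q * Q + r.
Hypothesis Hr : 1 <= r < q.
Hypothesis HQ : 0 <= Q.

Lemma II_F v : II p q (FF Q v) = II q r v.
Proof. destruct v; unfold II, FF; simpl; subst p; ring. Qed.

Lemma L1 v : lambda_couple q r v -> mu_couple p q (FF Q v).
Proof.
  destruct v as [x y]. intros [i [Hi [He Hy]]]; simpl in *.
  exists i. unfold is_mu_couple, FF; simpl. split; [nia|]. split; [|lia].
  subst p i; ring.
Qed.

Lemma L2 v : mu_couple q r v -> lambda_couple p q (FF Q v).
Proof.
  destruct v as [x y]. intros [i [Hi [He Hx]]]; simpl in *.
  exists i. unfold is_lambda_couple, FF; simpl. split; [nia|].
  assert (y * r <= 0) by nia.
  assert (y <= 0) by nia.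
  assert ((y + q) * r >= 1) by nia.
  assert (y + q > 0) by nia.
  assert (- y * Q <= (q - 1) * Q) by nia.
  split; [subst p i; ring|]. nia.
Qed.

Lemma L3 u : mu_couple p q u -> II p q u <= q -> lambda_couple q r (GG Q u).
Proof.
  destruct u as [a b]. intros [i [Hi [He Ha]]] Hle; unfold II in Hle; simpl in *.
  exists i. unfold is_lambda_couple, GG; simpl. split; [lia|]. split; [|lia].
  subst p i; ring.
Qed.

Lemma L4 u : lambda_couple p q u -> II p q u <= q -> mu_couple q r (GG Q u).
Proof.
  destruct u as [a b]. intros [i [Hi [He Hb]]] Hle; unfold II in Hle; simpl in *.
  exists i. unfold is_mu_couple, GG; simpl. split; [lia|]. split; [subst p i; ring|].
  assert (a * p <= 0) by nia.
  assert (a <= 0) by nia.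
  assert ((a + q) * p >= 1) by nia.
  assert (a + q > 0) by nia.
  assert (Hk : q * (b + a * Q) = i - a * r) by (subst p; nia).
  assert (- a * r <= (q - 1) * r) by nia.
  split; nia.
Qed.
End S.



Lemma FG Q v : FF Q (GG Q v) = v.
Proof. destruct v; unfold FF, GG; simpl; f_equal; ring. Qed.
Lemma GF Q v : GG Q (FF Q v) = v.
Proof. destruct v; unfold FF, GG; simpl; f_equal; ring. Qed.
Lemma F_add Q u w : FF Q (addZ2 u w) = addZ2 (FF Q u) (FF Q w).
Proof. destruct u, w; unfold FF, addZ2; simpl; f_equal; ring. Qed.
Lemma G_add Q u w : GG Q (addZ2 u w) = addZ2 (GG Q u) (GG Q w).
Proof. destruct u, w; unfold GG, addZ2; simpl; f_equal; ring. Qed.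
Lemma II_add p q u w : II p q (addZ2 u w) = II p q u + II p q w.
Proof. destruct u, w; unfold II, addZ2; simpl; ring. Qed.

Theorem proposition3p10 (dj dk : Z) :
  1 < dj -> dj < dk -> Z.gcd dj dk = 1 ->
  let r := dk mod dj in
  forall e : Z * Z,
    (Bez dk dj e /\ (exists v', Bez dj r v' /\ e = fmap dj dk v')
       /\ irreducible_Bez dk dj e)
    <->
    (exists v', Bez dj r v' /\ irreducible_Bez dj r v' /\ e = fmap dj dk v').
Proof.
  intros H1 H2 Hg r e.
  assert (Hdm : dk = dj * (dk / dj) + r) by (apply Z.div_mod; lia).
  assert (Hrb : 0 <= r < dj) by (apply Z.mod_pos_bound; lia).
  assert (HQ : 0 <= dk / dj) by (apply Z.div_pos; lia).
  assert (Hr0 : r <> 0).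
  { intro E. assert (Hd : (dj | Z.gcd dj dk)).
    { apply Z.gcd_greatest. apply Z.divide_refl. exists (dk / dj). lia. }
    rewrite Hg in Hd. apply Z.divide_pos_le in Hd; lia. }
  set (Q := dk / dj) in *.
  assert (HF : forall v, fmap dj dk v = FF Q v) by reflexivity.
  assert (Hr : 1 <= r < dj) by lia.
  assert (Hpq : 1 <= dj < dk) by lia.
  assert (Hqr : 1 <= r < dj) by lia.
  split.
  - intros [_ [[v' [Hv' Ee]] Hirr]]. rewrite HF in Ee. subst e.
    exists v'. split; [exact Hv'|]. split; [|apply HF].
    destruct Hv' as [Hl | Hm].
    + left. split; [exact Hl|]. intros [u [w [Hu [Hw Ev]]]].
      pose proof (L1 dk dj r Q Hdm Hr v' Hl) as Hmu.
      destruct Hirr as [[Hl2 _] | [_ Hn]].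
      * pose proof (lam_fst _ _ _ Hpq Hl2). pose proof (mu_snd _ _ _ Hpq Hmu). lia.
      * apply Hn. exists (FF Q u), (FF Q w). split; [apply (L1 dk dj r Q Hdm Hr); auto|].
        split; [apply (L1 dk dj r Q Hdm Hr); auto|]. rewrite Ev. apply F_add.
    + right. split; [exact Hm|]. intros [u [w [Hu [Hw Ev]]]].
      pose proof (L2 dk dj r Q Hdm Hr HQ v' Hm) as Hla.
      destruct Hirr as [[_ Hn] | [Hm2 _]].
      * apply Hn. exists (FF Q u), (FF Q w). split; [apply (L2 dk dj r Q Hdm Hr HQ); auto|].
        split; [apply (L2 dk dj r Q Hdm Hr HQ); auto|]. rewrite Ev. apply F_add.
      * pose proof (lam_fst _ _ _ Hpq Hla). pose proof (mu_snd _ _ _ Hpq Hm2). lia.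
  - intros [v' [Hv' [Hirr Ee]]]. rewrite HF in Ee. subst e.
    assert (HIe : II dk dj (FF Q v') <= dj).
    { rewrite (II_F dk dj r Q Hdm).
      destruct Hv' as [Hl | Hm]; [apply lam_i in Hl | apply mu_i in Hm]; lia. }
    split.
    { destruct Hv' as [Hl | Hm].
      - right. apply (L1 dk dj r Q Hdm Hr); auto.
      - left. apply (L2 dk dj r Q Hdm Hr HQ); auto. }
    split; [exists v'; split; [exact Hv'|apply HF]|].
    destruct Hirr as [[Hl Hn] | [Hm Hn]].
    + right. split; [apply (L1 dk dj r Q Hdm Hr); auto|].
      intros [u [w [Hu [Hw Ev]]]]. apply Hn.
      pose proof (mu_i _ _ _ Hu). pose proof (mu_i _ _ _ Hw).
      assert (Hs := II_add dk dj u w). rewrite <- Ev in Hs.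
      exists (GG Q u), (GG Q w).
      split; [apply (L3 dk dj r Q Hdm Hr); auto; lia|].
      split; [apply (L3 dk dj r Q Hdm Hr); auto; lia|].
      rewrite <- G_add, <- Ev, GF. reflexivity.
    + left. split; [apply (L2 dk dj r Q Hdm Hr HQ); auto|].
      intros [u [w [Hu [Hw Ev]]]]. apply Hn.
      pose proof (lam_i _ _ _ Hu). pose proof (lam_i _ _ _ Hw).
      assert (Hs := II_add dk dj u w). rewrite <- Ev in Hs.
      exists (GG Q u), (GG Q w).
      split; [apply (L4 dk dj r Q Hdm Hr HQ); auto; lia|].
      split; [apply (L4 dk dj r Q Hdm Hr HQ); auto; lia|].
      rewrite <- G_add, <- Ev, GF. reflexivity.
Qed.
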